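(* Let $\rho\in\Delta_{|\mathcal S|}$ and let $\pi,\pi'$ be policies. Define $\underline L_{\rho,\pi'}(v):=\min_{x\in X(\rho,\pi')}L_{\rho,\pi'}(x,v)$, where $$L_{\rho,\pi'}(x,v):=\langle c,x\rangle+\sum_{s\in\mathcal S}\eta^{\pi'}_\rho(s)\,\bar h^{x(\cdot,s)}(s)+\langle v,\rho-(\hat I-\gamma P)^Tx\rangle .$$ Then, with $V^\pi\in\mathbb R^{|\mathcal S|}$ the value function of $\pi$, $$\underline L_{\rho,\pi'}(V^\pi)=\langle V^\pi,\rho\rangle-\sum_{s\in\mathcal S}\eta^{\pi'}_\rho(s)\cdot\max_{p\in\Delta_{|\mathcal A|}}\{-\psi^\pi(s,p)\}.$$
   Context: An infinite-horizon discounted MDP: finite $\mathcal S$, $\mathcal A$, transition probabilities $\mathcal P(s'\mid s,a)$, cost $c$, discount $\gamma\in[0,1)$. A policy assigns $\pi(\cdot\mid s)\in\Delta_{|\mathcal A|}$ (probability simplex) to each state. For each $s$, $p\mapsto h^p(s)$ is a closed convex function on $\Delta_{|\mathcal A|}$. $V^\pi(s)=\mathbb E[\sum_{t\ge0}\gamma^t(c(s_t,a_t)+h^{\pi(\cdot\mid s_t)}(s_t))\mid s_0=s,\ a_t\sim\pi(\cdot\mid s_t),\ s_{t+1}\sim\mathcal P(\cdot\mid s_t,a_t)]$, $Q^\pi(s,a)$ the same with $a_0=a$; the advantage function is $\psi^\pi(s,p):=\langle Q^\pi(s,\cdot),p\rangle-V^\pi(s)+h^p(s)-h^{\pi(\cdot\mid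 s)}(s)$. Visitation: $\kappa^\pi_q(s):=(1-\gamma)\sum_{t\ge0}\gamma^t\Pr^\pi\{s_t=s\mid s_0=q\}$ and $\eta^\pi_\rho(s):=(1-\gamma)^{-1}\sum_q\rho(q)\kappa^\pi_q(s)$. Vectors $x\in\mathbb R^{|\mathcal A|\times|\mathcal S|}$ have entries $x(a,s)$ and $\langle c,x\rangle=\sum_{s,a}c(s,a)x(a,s)$; $(\hat I-\gamma P)^Tx$ is the vector in $\mathbb R^{|\mathcal S|}$ with entries $\sum_a x(a,s)-\gamma\sum_{s',a}\mathcal P(s\mid s',a)x(a,s')$ (so $\langle v,(\hat I-\gamma P)^Tx\rangle=\sum_{s,a}x(a,s)[v(s)-\gamma\sum_{s'}\mathcal P(s'\mid s,a)v(s')]$). $X(\rho,\pi'):=\{x\ge0:\sum_{a}x(a,s)=\eta^{\pi'}_\rho(s)\ \forall s\}$. For $x\in X(\rho,\pi')$, $\bar h^{x(\cdot,s)}(s):=h^{u(\cdot,s)}(s)$ with $u(\cdot,s)=x(\cdot,s)/\sum_a x(a,s)$. *)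

(* Defs.v *)
From HB Require Import structures.
From mathcomp Require Import all_boot all_order all_algebra.
From mathcomp Require Import all_classical all_reals all_analysis.
Set Implicit Arguments. Unset Strict Implicit. Unset Printing Implicit Defensive.
Import Order.TTheory GRing.Theory Num.Theory.
Local Open Scope ring_scope.

Section MDP.
Variables (R : realType) (S A : finType).

Definition in_simplex (T : finType) (p : T -> R) : Prop :=
  (forall t, 0 <= p t) /\ \sum_(t : T) p t = 1.

(* a policy: pi s is a distribution on actions; pi s a = pi(a|s) *)
Definition is_policy (pi : S -> A -> R) : Prop := forall s, in_simplex (pi s).

(* transition kernel: P s a s' = P(s' | s, a) *)
Definition is_kernel (P : S -> A -> S -> R) : Prop :=
  forall s a, in_simplex (P s a).

(* closed convex function on the simplex Delta_|A| (real valued on Delta):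
   convex on Delta, and lower semicontinuous relative to Delta (closed epigraph) *)
Definition closed_convex_on_simplex (f : (A -> R) -> R) : Prop :=
  (forall p q (t : R), in_simplex p -> in_simplex q -> 0 <= t <= 1 ->
     f (fun a => t * p a + (1 - t) * q a) <= t * f p + (1 - t) * f q) /\
  (forall p, in_simplex p -> forall e : R, 0 < e -> exists2 d : R, 0 < d &
     forall q, in_simplex q -> (forall a, `|q a - p a| < d) -> f p - e < f q).

(* Pr^pi { s_t = s' | s_0 = q } *)
Fixpoint state_prob (P : S -> A -> S -> R) (pi : S -> A -> R) (t : nat)
  (q s' : S) : R :=
  match t with
  | 0 => (q == s')%:R
  | t.+1 => \sum_(s : S) state_prob P pi t q s *
              \sum_(a : A) pi s a * P s a s'
  end.

Definition step_cost (c : S -> A -> R) (h : S -> (A -> R) -> R)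
  (pi : S -> A -> R) (s : S) : R :=
  \sum_(a : A) pi s a * c s a + h s (pi s).

Definition rseries (u : nat -> R) : R := limn (fun n => \sum_(0 <= t < n) u t).

(* V^pi(s) = E[ sum_t gamma^t (c(s_t,a_t) + h^{pi(.|s_t)}(s_t)) | s_0 = s ] *)
Definition Vfun (gamma : R) (P : S -> A -> S -> R) (c : S -> A -> R)
  (h : S -> (A -> R) -> R) (pi : S -> A -> R) (s : S) : R :=
  rseries (fun t => gamma ^+ t *
    \sum_(s' : S) state_prob P pi t s s' * step_cost c h pi s').

(* Q^pi(s,a): same with a_0 = a *)
Definition Qfun (gamma : R) (P : S -> A -> S -> R) (c : S -> A -> R)
  (h : S -> (A -> R) -> R) (pi : S -> A -> R) (s : S) (a : A) : R :=
  c s a + h s (pi s) + gamma * \sum_(s' : S) P s a s' * Vfun gamma P c h pi s'.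

Definition psi (gamma : R) (P : S -> A -> S -> R) (c : S -> A -> R)
  (h : S -> (A -> R) -> R) (pi : S -> A -> R) (s : S) (p : A -> R) : R :=
  \sum_(a : A) Qfun gamma P c h pi s a * p a - Vfun gamma P c h pi s
  + h s p - h s (pi s).

Definition kappa (gamma : R) (P : S -> A -> S -> R) (pi : S -> A -> R)
  (q s : S) : R :=
  (1 - gamma) * rseries (fun t => gamma ^+ t * state_prob P pi t q s).

Definition eta_vis (gamma : R) (P : S -> A -> S -> R) (pi : S -> A -> R)
  (rho : S -> R) (s : S) : R :=
  (1 - gamma)^-1 * \sum_(q : S) rho q * kappa gamma P pi q s.

(* X(rho, pi'); x a s = x(a,s) *)
Definition Xset (gamma : R) (P : S -> A -> S -> R) (pi' : S -> A -> R)
  (rho : S -> R) (x : A -> S -> R) : Prop :=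
  (forall a s, 0 <= x a s) /\
  (forall s, \sum_(a : A) x a s = eta_vis gamma P pi' rho s).

Definition hbar (h : S -> (A -> R) -> R) (x : A -> S -> R) (s : S) : R :=
  h s (fun a => x a s / \sum_(a' : A) x a' s).

(* ((I^ - gamma P)^T x)(s) *)
Definition flowT (gamma : R) (P : S -> A -> S -> R) (x : A -> S -> R) (s : S)
  : R :=
  \sum_(a : A) x a s - gamma * \sum_(s' : S) \sum_(a : A) P s' a s * x a s'.

Definition Lag (gamma : R) (P : S -> A -> S -> R) (c : S -> A -> R)
  (h : S -> (A -> R) -> R) (pi' : S -> A -> R) (rho : S -> R)
  (x : A -> S -> R) (v : S -> R) : R :=
  \sum_(s : S) \sum_(a : A) c s a * x a s
  + \sum_(s : S) eta_vis gamma P pi' rho s * hbar h x s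
  + \sum_(s : S) v s * (rho s - flowT gamma P x s).

End MDP.

Definition is_min_of (R : realType) (T : Type) (D : T -> Prop) (f : T -> R)
  (m : R) : Prop :=
  (exists2 x, D x & f x = m) /\ (forall x, D x -> m <= f x).

Definition is_max_of (R : realType) (T : Type) (D : T -> Prop) (f : T -> R)
  (m : R) : Prop :=
  (exists2 x, D x & f x = m) /\ (forall x, D x -> f x <= m).

(* Main.v *)
Require Import Defs.
From HB Require Import structures.
From mathcomp Require Import all_boot all_order all_algebra.
From mathcomp Require Import all_classical all_reals all_analysis.
From mathcomp Require Import ring lra.
Import Order.TTheory GRing.Theory Num.Theory.
Local Open Scope ring_scope.
Import numFieldNormedType.Exports.

Section Helpers.
Local Open Scope classical_set_scope.
Local Set Implicit Arguments. Local Unset Strict Implicit.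

Section Compact.
Variables (R : realType) (A : finType).

Definition lsc_s (f : (A -> R) -> R) : Prop :=
  forall p, in_simplex p -> forall e : R, 0 < e -> exists2 d : R, 0 < d &
     forall q, in_simplex q -> (forall a, `|q a - p a| < d) -> f p - e < f q.

Let n := #|A|.
Definition tof (v : 'rV[R]_n) : A -> R := fun a => v ord0 (enum_rank a).
Definition tov (p : A -> R) : 'rV[R]_n := \row_i p (enum_val i).
Lemma tovK p : tof (tov p) = p.
Proof. by apply/funext => a; rewrite /tof /tov mxE enum_rankK. Qed.

Definition Ksimp : set 'rV[R]_n := [set v | in_simplex (tof v)].

Lemma sum_cont (r : seq A) :
  continuous (fun v : 'rV[R]_n => \sum_(a <- r) v ord0 (enum_rank a)).
Proof.
elim: r => [|a r IH] v.
  under eq_fun => ? do rewrite big_nil. exact: cst_continuous.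
under eq_fun => ? do rewrite big_cons.
exact: (cvgD (@coord_continuous _ 1 n ord0 (enum_rank a) v) (IH v)).
Qed.

Lemma Ksimp_closed : closed Ksimp.
Proof.
have -> : Ksimp = (\bigcap_(a in setT) [set v : 'rV[R]_n | 0 <= v ord0 (enum_rank a)])
   `&` [set v | \sum_(a : A) v ord0 (enum_rank a) = 1].
  apply/seteqP; split => v /=.
    by move=> [H1 H2]; split => // a _; exact: H1.
  by move=> [H1 H2]; split => // a; exact: H1.
apply: closedI.
  apply: closed_bigI => a _.
  apply: (@preimage_closed _ _ (fun v : 'rV[R]_n => v ord0 (enum_rank a)) [set x | 0 <= x]).
    by move=> v _; exact: coord_continuous.
  exact: closed_ge.
apply: (@preimage_closed _ _ (fun v : 'rV[R]_n => \sum_(a : A) v ord0 (enum_rank a)) [set x | x = 1]).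
  by move=> v _; exact: sum_cont.
exact: closed_eq.
Qed.

Lemma Ksimp_compact : compact Ksimp.
Proof.
have Bc := @rV_compact R n (fun _ => `[0, 1]%classic) (fun _ => @segment_compact R 0 1).
apply: (subclosed_compact Ksimp_closed Bc).
move=> v [H1 H2] i /=.
have -> : v ord0 i = tof v (enum_val i) by rewrite /tof enum_valK.
rewrite in_itv /= H1 /= -H2.
rewrite (bigD1 (enum_val i)) //= lerDl.
by apply: sumr_ge0 => a _; exact: H1.
Qed.

Lemma seq_min (T : eqType) (g : T -> R) (r : seq T) (y0 : T) : y0 \in r ->
  exists2 y, y \in r & forall z, z \in r -> g y <= g z.
Proof.
elim: r y0 => [//|a r IH] y0 _.
case: (boolP (has (fun _ => true) r)) => [|hr].
  case/hasP => y1 y1r _.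
  have [y yr Hy] := IH y1 y1r.
  case: (lerP (g a) (g y)) => ay.
    exists a; first by rewrite inE eqxx.
    move=> z; rewrite inE => /orP[/eqP ->//|zr].
    exact: le_trans ay (Hy z zr).
  exists y; first by rewrite inE yr orbT.
  move=> z; rewrite inE => /orP[/eqP ->|zr]; [exact: ltW | exact: Hy].
exists a; first by rewrite inE eqxx.
move=> z; rewrite inE => /orP[/eqP ->//|zr].
by exfalso; move/negP: hr; apply; apply/hasP; exists z.
Qed.

Lemma lsc_min (f : (A -> R) -> R) (p0 : A -> R) : in_simplex p0 -> lsc_s f ->
  exists2 p, in_simplex p & forall q, in_simplex q -> f p <= f q.
Proof.
move=> Sp0 lf.
apply: contrapT => nomin.
pose f' v := f (tof v).
have Hlt x : Ksimp x -> exists y, Ksimp y /\ f' y < f' x.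
  move=> Kx; apply: contrapT => Hn; apply: nomin; exists (tof x) => // q Sq.
  rewrite leNgt; apply/negP => fq; apply: Hn; exists (tov q).
  by rewrite /Ksimp /f' /= tovK.
pose U y := \bigcup_(pr in [set pr : 'rV[R]_n * R | 0 < pr.2 /\
    forall w, Ksimp w -> ball pr.1 pr.2 w -> f' y < f' w]) ball pr.1 pr.2.
have Uopen y : Ksimp y -> open (U y).
  by move=> _; apply: bigcup_open => pr _; exact: ball_open.
have cov : Ksimp `<=` \bigcup_(y in Ksimp) U y.
  move=> x Kx; have [y [Ky fyx]] := Hlt x Kx.
  have [d d0 Hd] := lf (tof x) Kx (f' x - f' y) (ltac:(by rewrite subr_gt0)).
  exists y => //; exists (x, d) => /=; last exact: ballxx.
  split => // w Kw [_ bw].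
  have := Hd (tof w) Kw; rewrite /f' opprB addrC subrK; apply => a.
  by have := bw ord0 (enum_rank a); rewrite /ball /= distrC.
have Kc := Ksimp_compact; rewrite compact_cover in Kc.
have [D' D'K D'cov] := Kc _ _ _ Uopen cov.
have Kp0 : Ksimp (tov p0) by rewrite /Ksimp /= tovK.
have [y0 y0D _] := D'cov _ Kp0.
have [ym ymD Hym] := @seq_min _ f' (finmap.enum_fset D') y0 y0D.
have Kym : Ksimp ym by have := D'K _ ymD; rewrite inE.
have [yi yiD [pr [pr0 Hpr] bpr]] := D'cov _ Kym.
have := Hpr _ Kym bpr.
by rewrite ltNge Hym.
Qed.

End Compact.

Section Alg.
Variables (R : realType) (S A : finType).

Lemma rs_ge0 (u : nat -> R) : (forall t, 0 <= u t) -> 0 <= rseries u.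
Proof.
move=> u0; rewrite /rseries.
have nd : {homo (fun n => \sum_(0 <= t < n) u t) : n m / (n <= m)%N >-> n <= m}.
  move=> n m nm; rewrite (@big_cat_nat _ _ _ n 0 m) //= lerDl.
  by apply: sumr_ge0 => *.
case: (pselect (cvgn (fun n => \sum_(0 <= t < n) u t))) => cv.
  by have := nondecreasing_cvgn_le nd cv 0; rewrite big_geq.
rewrite /lim /lim_in; case: xgetP => //= x _ Hx.
exfalso; apply: cv; exact: cvgP Hx.
Qed.

Lemma state_prob_ge0 (P : S -> A -> S -> R) (pi : S -> A -> R) t q s :
  is_kernel P -> is_policy pi -> 0 <= state_prob P pi t q s.
Proof.
move=> kP ppi; elim: t s => [|t IH] s /=; first exact: ler0n.
apply: sumr_ge0 => s' _; apply: mulr_ge0 => //.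
apply: sumr_ge0 => a _; apply: mulr_ge0; [exact: (ppi s').1 | exact: (kP s' a).1].
Qed.

Lemma eta_ge0 (gamma : R) (P : S -> A -> S -> R) (pi : S -> A -> R) rho s :
  is_kernel P -> is_policy pi -> 0 <= gamma < 1 -> in_simplex rho ->
  0 <= eta_vis gamma P pi rho s.
Proof.
move=> kP ppi /andP[g0 g1] [rho0 _].
have g1' : 0 <= 1 - gamma by rewrite subr_ge0 ltW.
rewrite /eta_vis; apply: mulr_ge0; first by rewrite invr_ge0.
apply: sumr_ge0 => q _; apply: mulr_ge0 => //.
rewrite /kappa; apply: mulr_ge0 => //; apply: rs_ge0 => t.
apply: mulr_ge0; [exact: exprn_ge0 | exact: state_prob_ge0].
Qed.

Lemma lin_lsc (L : A -> R) (g : (A -> R) -> R) (k : R) : lsc_s g ->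
  lsc_s (fun p => \sum_a L a * p a + g p + k).
Proof.
move=> lg p Sp e e0.
have e20 : 0 < e / 2 by rewrite divr_gt0.
have [d1 d10 Hd1] := lg p Sp _ e20.
pose M := \sum_a `|L a| + 1.
have M0 : 0 < M by rewrite /M ltr_pwDr // sumr_ge0 // => a _.
have d20 : 0 < e / (2 * M) by rewrite divr_gt0 // mulr_gt0.
exists (Num.min d1 (e / (2 * M))); first by rewrite lt_min d10 d20.
move=> q Sq Hq.
have Hg := Hd1 q Sq (fun a => lt_le_trans (Hq a) (ltac:(by rewrite ge_min; apply/orP; left))).
move: Hg.
suff : \sum_a L a * p a - \sum_a L a * q a <= e / 2.
  move=> H H2.
  have -> : e = e / 2 + e / 2 by rewrite -splitr.
  lra.
rewrite -sumrB.
apply: le_trans (_ : \sum_a `|L a| * (e / (2 * M)) <= _).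
  apply: ler_sum => a _; rewrite -mulrBr.
  apply: le_trans (ler_norm _) _; rewrite normrM; apply: ler_wpM2l => //.
  rewrite distrC; apply: ltW; apply: lt_le_trans (Hq a) _.
  by rewrite ge_min; apply/orP; right.
rewrite -mulr_suml.
have S0 : \sum_a `|L a| <= M by rewrite /M lerDl.
apply: le_trans (_ : M * (e / (2 * M)) <= _).
  by apply: ler_wpM2r => //; exact: ltW.
rewrite le_eqVlt; apply/orP; left; apply/eqP.
by field; exact: lt0r_neq0.
Qed.

End Alg.

Section Main.
Variables (R : realType) (S A : finType)
  (P : S -> A -> S -> R) (c : S -> A -> R) (h : S -> (A -> R) -> R)
  (gamma : R) (rho : S -> R) (pi pi' : S -> A -> R).

Definition Vv := Vfun gamma P c h pi.
Definition Qq := Qfun gamma P c h pi.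
Definition et := eta_vis gamma P pi' rho.

Definition Gs (x : A -> S -> R) s := \sum_a x a s * Qq s a
  - (\sum_a x a s) * (Vv s + h s (pi s)) + et s * hbar h x s.

Lemma Lag_decomp x :
  Lag gamma P c h pi' rho x Vv = \sum_s Vv s * rho s + \sum_s Gs x s.
Proof.
rewrite /Lag /flowT /Gs /Qq /Qfun -/Vv -/et.
have key : \sum_s Vv s * \sum_s' \sum_a P s' a s * x a s' =
   \sum_s' \sum_a x a s' * \sum_s P s' a s * Vv s.
  rewrite (eq_bigr (fun s => \sum_s' \sum_a Vv s * (P s' a s * x a s'))); last first.
    by move=> s _; rewrite big_distrr; apply: eq_bigr => s' _; rewrite big_distrr.
  rewrite exchange_big; apply: eq_bigr => s' _; rewrite exchange_big.
  apply: eq_bigr => a _; rewrite big_distrr; apply: eq_bigr => s _ /=; ring.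
have E1 : \sum_s Vv s * (rho s - (\sum_a x a s - gamma * \sum_s' \sum_a P s' a s * x a s'))
   = \sum_s (Vv s * rho s - Vv s * \sum_a x a s)
     + gamma * \sum_s Vv s * \sum_s' \sum_a P s' a s * x a s'.
  rewrite big_distrr -big_split; apply: eq_bigr => s _ /=; ring.
rewrite E1 key big_distrr /= -!big_split /=.
apply: eq_bigr => s _ /=.
have E2 : \sum_a x a s * (c s a + h s (pi s) + gamma * \sum_s' P s a s' * Vv s')
  = \sum_a c s a * x a s + (\sum_a x a s) * h s (pi s)
    + gamma * \sum_a x a s * \sum_s' P s a s' * Vv s'.
  rewrite big_distrr mulr_suml -!big_split; apply: eq_bigr => a _ /=; ring.
rewrite E2; ring.
Qed.

Lemma Gs_pos x s : \sum_a x a s = et s -> 0 < et s ->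
  Gs x s = et s * psi gamma P c h pi s (fun a => x a s / \sum_a' x a' s).
Proof.
move=> Hx e0; rewrite /Gs /psi /hbar -/Qq -/Vv.
set u := (fun a => x a s / \sum_a' x a' s).
have Hs : et s * \sum_a Qq s a * (x a s / \sum_a' x a' s) = \sum_a x a s * Qq s a.
  rewrite big_distrr; apply: eq_bigr => a _; rewrite Hx.
  rewrite /= mulrCA mulrC; congr (_ * _); rewrite mulrC divfK //; exact: lt0r_neq0.
set T := \sum_a Qq s a * (x a s / \sum_a' x a' s).
have -> : et s * (T - Vv s + h s u - h s (pi s)) =
  et s * T - et s * Vv s + et s * h s u - et s * h s (pi s) by ring.
rewrite /T Hs Hx; ring.
Qed.

Lemma Gs_zero x s : (forall a, 0 <= x a s) -> \sum_a x a s = et s -> et s = 0 ->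
  Gs x s = 0.
Proof.
move=> x0 Hx e0.
have xz : forall a, x a s = 0.
  move=> a; have H0 : \sum_a x a s = 0 by rewrite Hx e0.
  by have := psumr_eq0P (fun a _ => x0 a) H0; apply.
rewrite /Gs Hx e0 big1 ?mul0r ?subr0 ?addr0 //.
by move=> a _; rewrite xz mul0r.
Qed.

End Main.

End Helpers.

Theorem lemma2p6 (R : realType) (S A : finType)
  (P : S -> A -> S -> R) (c : S -> A -> R) (h : S -> (A -> R) -> R)
  (gamma : R) (rho : S -> R) (pi pi' : S -> A -> R) :
  is_kernel P ->
  0 <= gamma < 1 ->
  (forall s, closed_convex_on_simplex (h s)) ->
  in_simplex rho -> is_policy pi -> is_policy pi' ->
  exists m : S -> R,
    (forall s, is_max_of (@in_simplex R A)
       (fun p => - psi gamma P c h pi s p) (m s)) /\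
    is_min_of (Xset gamma P pi' rho)
      (fun x => Lag gamma P c h pi' rho x (Vfun gamma P c h pi))
      (\sum_(s : S) Vfun gamma P c h pi s * rho s
       - \sum_(s : S) eta_vis gamma P pi' rho s * m s).
Proof.
move=> kP gam hcc Srho ppi ppi'.
have eta0 s : 0 <= eta_vis gamma P pi' rho s := eta_ge0 s kP ppi' gam Srho.
have Hmin s : exists p, in_simplex p /\ forall q, in_simplex q ->
    psi gamma P c h pi s p <= psi gamma P c h pi s q.
  have lf := lin_lsc (fun a => Qfun gamma P c h pi s a)
     (- Vfun gamma P c h pi s - h s (pi s)) ((hcc s).2).
  have [p Sp Hp] := lsc_min (ppi s) lf.
  exists p; split => // q Sq; have := Hp q Sq; rewrite /psi => H; lra.
have [ps Hps] := choice Hmin.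
exists (fun s => - psi gamma P c h pi s (ps s)).
split.
  move=> s; split; first by exists (ps s); [exact: (Hps s).1|].
  by move=> q Sq; rewrite lerN2; exact: (Hps s).2 q Sq.
split.
  exists (fun a s => eta_vis gamma P pi' rho s * ps s a).
    split.
      by move=> a s; apply: mulr_ge0 => //; exact: ((Hps s).1.1 a).
    by move=> s; rewrite -big_distrr /= ((Hps s).1.2) mulr1.
  rewrite Lag_decomp -sumrN; congr (_ + _); apply: eq_bigr => s _.
  rewrite mulrN opprK.
  have xs : \sum_a eta_vis gamma P pi' rho s * ps s a = eta_vis gamma P pi' rho s.
    by rewrite -big_distrr /= ((Hps s).1.2) mulr1.
  have [e0|e0] : eta_vis gamma P pi' rho s = 0 \/ 0 < eta_vis gamma P pi' rho s.
    by move: (eta0 s); rewrite le_eqVlt => /orP[/eqP <-|->]; [left|right].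
    rewrite Gs_zero //; first by rewrite e0 mul0r.
    by move=> a; apply: mulr_ge0 => //; exact: ((Hps s).1.1 a).
  rewrite Gs_pos //; congr (_ * _); congr (psi _ _ _ _ _ _ _).
  apply/funext => a; rewrite xs mulrC mulKf //; exact: lt0r_neq0.
move=> x [x0 xs]; rewrite Lag_decomp -sumrN lerD2l; apply: ler_sum => s _.
rewrite mulrN opprK.
have [e0|e0] : eta_vis gamma P pi' rho s = 0 \/ 0 < eta_vis gamma P pi' rho s.
  by move: (eta0 s); rewrite le_eqVlt => /orP[/eqP <-|->]; [left|right].
  by rewrite Gs_zero // e0 mul0r.
rewrite Gs_pos //; apply: ler_wpM2l; first exact: ltW.
apply: (Hps s).2; split.
  by move=> a; apply: divr_ge0 => //; rewrite xs; exact: eta0.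
rewrite -mulr_suml divff // xs; exact: lt0r_neq0.
Qed.
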